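(* Let $1\le p<\infty$ and $f\in BV_p[0,1]$. For every $\varepsilon>0$ there exists $\delta>0$ such that whenever $0\le x_1<x_2<\dots<x_m\le1$ and $|f(x_j)|<\delta$ for all $j\in\{1,\dots,m\}$, one has $\left(\sum_{j=1}^{m-1}|f(x_{j+1})-f(x_j)|^p\right)^{1/p}<\varepsilon$.
   Context: For $1\le p<\infty$, $BV_p[0,1]$ is the set of functions $f:[0,1]\to\mathbb F$ ($\mathbb F\in\{\mathbb R,\mathbb C\}$) with finite total Wiener $p$-variation $\operatorname{Var}_p(f,[0,1]):=\sup\sum_{j=1}^m|f(t_j)-f(t_{j-1})|^p$, the supremum over all partitions $0=t_0<t_1<\dots<t_m=1$. *)

(* Defs.v *)
From Stdlib Require Import Reals Lra.
Open Scope R_scope.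

(* Scalars: F = C, represented as pairs of reals; the real case R is the
   sub-case of functions with zero imaginary part (isometric embedding). *)
Definition Cpx : Type := (R * R)%type.
Definition Csub (z w : Cpx) : Cpx := (fst z - fst w, snd z - snd w).
Definition Cmod (z : Cpx) : R := sqrt (fst z ^ 2 + snd z ^ 2).

Definition rpow (x p : R) : R := if Rlt_dec 0 x then Rpower x p else 0.

Fixpoint rsum (n : nat) (g : nat -> R) : R :=
  match n with
  | O => 0
  | S k => rsum k g + g k
  end.

Definition is_partition01 (m : nat) (t : nat -> R) : Prop :=
  t O = 0 /\ t m = 1 /\ (forall i, (i < m)%nat -> t i < t (S i)).

Definition pvar_sum (p : R) (f : R -> Cpx) (m : nat) (t : nat -> R) : R :=
  rsum m (fun i => rpow (Cmod (Csub (f (t (S i))) (f (t i)))) p).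

Definition BVp (p : R) (f : R -> Cpx) : Prop :=
  exists M : R, forall (m : nat) (t : nat -> R),
    is_partition01 m t -> pvar_sum p f m t <= M.

(* Main.v *)
Require Import Defs.
From Stdlib Require Import Reals Lra Lia List Classical.
From Coquelicot Require Complex.
Open Scope R_scope.
Import ListNotations.

Lemma Cmod_ge0 z : 0 <= Cmod z.
Proof. unfold Cmod; apply sqrt_pos. Qed.

Lemma Cmod_tri a b c : Cmod (Csub a c) <= Cmod (Csub a b) + Cmod (Csub b c).
Proof.
  assert (E : Csub a c = Complex.Cplus (Csub a b) (Csub b c)).
  { unfold Csub, Complex.Cplus; simpl; f_equal; ring. }
  rewrite E. exact (Complex.Cmod_triangle _ _).
Qed.

Lemma Cmod_sub_le a b : Cmod (Csub a b) <= Cmod a + Cmod b.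
Proof.
  assert (E : Csub a b = Complex.Cplus a (Complex.Copp b)).
  { unfold Csub, Complex.Cplus, Complex.Copp; simpl; f_equal; ring. }
  rewrite E. eapply Rle_trans. exact (Complex.Cmod_triangle _ _).
  right. f_equal. unfold Cmod, Complex.Cmod, Complex.Copp; simpl. f_equal. ring.
Qed.

Lemma rpow_ge0 x p : 0 <= rpow x p.
Proof. unfold rpow; destruct (Rlt_dec 0 x). unfold Rpower; left; apply exp_pos. lra. Qed.

Lemma rpow_le x y p : 0 < p -> 0 <= x <= y -> rpow x p <= rpow y p.
Proof.
  intros Hp [Hx Hxy]. unfold rpow.
  destruct (Rlt_dec 0 x); destruct (Rlt_dec 0 y).
  - apply Rle_Rpower_l; lra.
  - lra.
  - unfold Rpower; left; apply exp_pos.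
  - lra.
Qed.

Lemma rpow_lt x y p : 0 < p -> 0 <= x < y -> rpow x p < rpow y p.
Proof.
  intros Hp [Hx Hxy]. unfold rpow.
  destruct (Rlt_dec 0 x); destruct (Rlt_dec 0 y).
  - apply Rlt_Rpower_l; lra.
  - lra.
  - unfold Rpower; apply exp_pos.
  - lra.
Qed.

Lemma rpow_mul a b p : 0 <= a -> 0 <= b -> rpow (a * b) p = rpow a p * rpow b p.
Proof.
  intros Ha Hb. unfold rpow.
  destruct (Rlt_dec 0 a); destruct (Rlt_dec 0 b); destruct (Rlt_dec 0 (a*b)).
  - rewrite Rpower_mult_distr; auto.
  - exfalso; apply n; apply Rmult_lt_0_compat; auto.
  - assert (b = 0) by lra; subst; rewrite Rmult_0_r in r0; lra.
  - ring.
  - assert (a = 0) by lra; subst; rewrite Rmult_0_l in r0; lra.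
  - ring.
  - assert (a = 0) by lra; subst; rewrite Rmult_0_l in r; lra.
  - ring.
Qed.

Lemma rpow_pos x p : 0 < x -> 0 < rpow x p.
Proof. intros H; unfold rpow; destruct (Rlt_dec 0 x). unfold Rpower; apply exp_pos. lra. Qed.

Lemma rpow_inv y p : 0 < p -> 0 < y -> rpow (rpow y p) (1/p) = y.
Proof.
  intros Hp Hy. unfold rpow at 2. destruct (Rlt_dec 0 y); [|lra].
  unfold rpow. destruct (Rlt_dec 0 (Rpower y p)).
  - rewrite Rpower_mult. replace (p * (1/p)) with 1 by (field; lra). apply Rpower_1; lra.
  - exfalso; apply n; unfold Rpower; apply exp_pos.
Qed.

Lemma rpow_inv2 y p : 0 < p -> 0 < y -> rpow (rpow y (1/p)) p = y.
Proof.
  intros Hp Hy. replace p with (1 / (1/p)) at 2 by (field; lra).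
  apply rpow_inv; auto. unfold Rdiv; rewrite Rmult_1_l; apply Rinv_0_lt_compat; lra.
Qed.

Definition term (f : R -> Cpx) (p x y : R) : R := rpow (Cmod (Csub (f y) (f x))) p.

Fixpoint csum f p (l : list R) : R :=
  match l with
  | x :: ((y :: _) as t) => term f p x y + csum f p t
  | _ => 0
  end.

Fixpoint incr (l : list R) : Prop :=
  match l with
  | x :: ((y :: _) as t) => x < y /\ incr t
  | _ => True
  end.

Lemma term_ge0 f p x y : 0 <= term f p x y.
Proof. unfold term, rpow. destruct (Rlt_dec _ _). unfold Rpower; left; apply exp_pos. lra. Qed.

Lemma csum_ge0 f p l : 0 <= csum f p l.
Proof.
  induction l as [|x t IH]; simpl; [lra|]. destruct t; [lra|].
  pose proof (term_ge0 f p x r); lra.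
Qed.

Lemma last_indep (l : list R) x d1 d2 : last (x :: l) d1 = last (x :: l) d2.
Proof. revert x; induction l as [|y l IH]; intros x; simpl; auto.
  specialize (IH y). simpl in IH. destruct l; auto. Qed.

Lemma last_In (l : list R) x d : In (last (x :: l) d) (x :: l).
Proof. revert x; induction l as [|y l IH]; intros x; simpl; auto.
  right. specialize (IH y). simpl in IH. destruct l; auto. Qed.

Lemma csum_app f p l1 x y l2 :
  csum f p ((x :: l1) ++ y :: l2) =
  csum f p (x :: l1) + term f p (last (x :: l1) x) y + csum f p (y :: l2).
Proof.
  revert x; induction l1 as [|z l1 IH]; intros x.
  - simpl. ring.
  - change ((x :: z :: l1) ++ y :: l2) with (x :: ((z :: l1) ++ y :: l2)).
    change (csum f p (x :: (z :: l1) ++ y :: l2)) with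
      (term f p x z + csum f p ((z :: l1) ++ y :: l2)).
    rewrite IH. change (csum f p (x :: z :: l1)) with (term f p x z + csum f p (z :: l1)).
    rewrite (last_indep l1 z z x). simpl last at 2. destruct l1; simpl; ring.
Qed.

Lemma csum_cons_ge f p a l : csum f p l <= csum f p (a :: l).
Proof. destruct l; simpl; [lra|]. pose proof (term_ge0 f p a r); lra. Qed.

Lemma csum_app_ge f p l1 l2 : csum f p l1 + csum f p l2 <= csum f p (l1 ++ l2).
Proof.
  destruct l1 as [|x l1]; [simpl; lra|].
  destruct l2 as [|y l2]. { rewrite app_nil_r; simpl; lra. }
  rewrite csum_app. pose proof (term_ge0 f p (last (x :: l1) x) y); lra.
Qed.

Lemma incr_tail a l : incr (a :: l) -> incr l.
Proof. destruct l; simpl; tauto. Qed.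

Lemma incr_lt a l : incr (a :: l) -> forall x, In x l -> a < x.
Proof.
  revert a; induction l as [|b l IH]; intros a H x Hx; [destruct Hx|].
  destruct H as [Hab H]. destruct Hx as [<-|Hx]; auto.
  specialize (IH b H x Hx); lra.
Qed.

Lemma incr_cons a l : incr l -> (forall x, In x l -> a < x) -> incr (a :: l).
Proof. destruct l; simpl; auto. Qed.

Lemma incr_app_l l1 l2 : incr (l1 ++ l2) -> incr l1.
Proof.
  induction l1 as [|x l1 IH]; simpl; auto.
  destruct l1; simpl in *; auto. tauto.
Qed.

Lemma incr_app_r l1 l2 : incr (l1 ++ l2) -> incr l2.
Proof. induction l1 as [|x l1 IH]; simpl; auto. intros H; apply IH. apply (incr_tail x); auto. Qed.

Lemma incr_app l1 y l2 : incr l1 -> (forall x, In x l1 -> x < y) -> incr (y :: l2) ->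
  incr (l1 ++ y :: l2).
Proof.
  induction l1 as [|x l1 IH]; simpl; auto. intros H1 H2 H3.
  apply incr_cons. apply IH; auto. apply (incr_tail x); auto.
  intros z Hz. apply in_app_or in Hz. destruct Hz as [Hz|Hz].
  apply (incr_lt x l1); auto.
  assert (x < y) by auto.
  destruct Hz as [<-|Hz]; auto. pose proof (incr_lt y l2 H3 z Hz); lra.
Qed.

Lemma split_at (b : R) l : incr l -> exists P Q, l = P ++ Q /\
  (forall x, In x P -> x < b) /\ (forall x, In x Q -> b <= x).
Proof.
  induction l as [|x l IH]; intros H.
  - exists [], []; simpl; repeat split; tauto.
  - destruct (Rlt_dec x b).
    + destruct (IH (incr_tail _ _ H)) as (P & Q & E & H1 & H2).
      exists (x :: P), Q; subst; simpl; repeat split; auto.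
      intros z [<-|Hz]; auto.
    + exists [], (x :: l); simpl; repeat split; auto. tauto.
      intros z [<-|Hz]. lra. pose proof (incr_lt x l H z Hz); lra.
Qed.

Lemma drop_eq (b : R) Q : incr Q -> (forall x, In x Q -> b <= x) ->
  exists Q', (Q = b :: Q' \/ Q = Q') /\ (forall x, In x Q' -> b < x).
Proof.
  intros H1 H2. destruct Q as [|y Q].
  - exists []; simpl; split; auto; tauto.
  - destruct (Req_dec y b) as [->|Hne].
    + exists Q; split; auto. intros x Hx; apply (incr_lt b Q H1 x Hx).
    + exists (y :: Q); split; auto. intros x [<-|Hx].
      specialize (H2 y (or_introl eq_refl)); lra.
      specialize (H2 y (or_introl eq_refl)). pose proof (incr_lt y Q H1 x Hx); lra.
Qed.


Lemma app_le f p (G2 : R -> Prop) th :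
  (forall x y, G2 x -> G2 y -> term f p x y <= th) -> 0 <= th ->
  forall P Q, (forall x, In x P -> G2 x) -> (forall x, In x Q -> G2 x) ->
  csum f p (P ++ Q) <= csum f p P + th + csum f p Q.
Proof.
  intros Hth Hth0 P Q HP HQ. destruct P as [|x P]; [simpl; lra|].
  destruct Q as [|y Q]. { rewrite app_nil_r; simpl; lra. }
  rewrite csum_app. assert (term f p (last (x :: P) x) y <= th).
  { apply Hth; [apply HP, last_In | apply HQ; left; auto]. } lra.
Qed.

Lemma gap f p (G2 : R -> Prop) k th :
  (forall a b z w, G2 z -> G2 w -> k * term f p a b <= term f p a z + term f p w b + th) ->
  0 <= th -> 0 <= k <= 1 ->
  forall P a b, (forall x, In x P -> G2 x) ->
  k * term f p a b + csum f p P - th <= csum f p (a :: P) + term f p (last (a :: P) a) b.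
Proof.
  intros H3 Hth Hk P a b HP. destruct P as [|z P].
  - simpl. pose proof (term_ge0 f p a b). nra.
  - change (csum f p (a :: z :: P)) with (term f p a z + csum f p (z :: P)).
    change (last (a :: z :: P) a) with (last (z :: P) a).
    assert (G2 (last (z :: P) a)) by (apply HP, last_In).
    specialize (H3 a b z (last (z :: P) a) (HP z (or_introl eq_refl)) H).
    lra.
Qed.

Lemma comb f p (G1 G2 : R -> Prop) k th :
  (forall x, G2 x -> G1 x) ->
  (forall x y, G2 x -> G2 y -> term f p x y <= th) ->
  (forall a b z w, G2 z -> G2 w -> k * term f p a b <= term f p a z + term f p w b + th) ->
  0 <= th -> 0 <= k <= 1 ->
  forall l1 a l2, incr (a :: l1) -> (forall x, In x (a :: l1) -> G1 x) ->
  incr l2 -> (forall x, In x l2 -> G2 x) -> (forall x, In x l2 -> a < x) ->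
  exists l, incr (a :: l) /\ (forall x, In x l -> G1 x) /\
    k * csum f p (a :: l1) + csum f p l2 - 3 * INR (length l1) * th <= csum f p (a :: l).
Proof.
  intros H21 Hth H3 Hth0 Hk l1. induction l1 as [|b l1 IH]; intros a l2 Hi1 HG1 Hi2 HG2 Ha.
  - exists l2. repeat split; auto. apply incr_cons; auto.
    simpl csum at 1. pose proof (csum_cons_ge f p a l2). simpl INR. lra.
  - destruct (split_at b l2 Hi2) as (P & Q & E & HP & HQ).
    assert (HiQ : incr Q) by (rewrite E in Hi2; eapply incr_app_r; eauto).
    assert (HiP : incr P) by (rewrite E in Hi2; eapply incr_app_l; eauto).
    assert (HG2P : forall x, In x P -> G2 x) by (intros; apply HG2; rewrite E; apply in_or_app; auto).
    assert (HG2Q : forall x, In x Q -> G2 x) by (intros; apply HG2; rewrite E; apply in_or_app; auto).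
    destruct (drop_eq b Q HiQ HQ) as (Q' & EQ & HQ').
    assert (HG2Q' : forall x, In x Q' -> G2 x).
    { intros x Hx; apply HG2Q; destruct EQ as [->| ->]; simpl; auto. }
    assert (HiQ' : incr Q') by (destruct EQ as [->| ->]; auto; eapply incr_tail; eauto).
    assert (HcQ : csum f p Q <= th + csum f p Q').
    { destruct EQ as [->| ->]; [|lra]. destruct Q' as [|y Q']; simpl; [lra|].
      assert (term f p b y <= th).
      { apply Hth; [apply HG2Q; left; auto | apply HG2Q'; left; auto]. } lra. }
    destruct (IH b Q' (incr_tail _ _ Hi1)) as (l' & Hl'1 & Hl'2 & Hl'3); auto.
    { intros x Hx; apply HG1; right; auto. }
    exists (P ++ b :: l'). repeat split.
    + change (incr ((a :: P) ++ b :: l')). apply incr_app; auto.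
      apply incr_cons; auto. intros x Hx; apply Ha; rewrite E; apply in_or_app; auto.
      intros x [<-|Hx]. destruct Hi1; auto. auto.
    + intros x Hx. apply in_app_or in Hx. destruct Hx as [Hx|[<-|Hx]]; auto.
      apply HG1; simpl; auto.
    + change (csum f p (a :: P ++ b :: l')) with (csum f p ((a :: P) ++ b :: l')).
      rewrite csum_app.
      pose proof (gap f p G2 k th H3 Hth0 Hk P a b HG2P).
      change (csum f p (a :: b :: l1)) with (term f p a b + csum f p (b :: l1)).
      pose proof (app_le f p G2 th Hth Hth0 P Q HG2P HG2Q). rewrite <- E in H0.
      change (length (b :: l1)) with (S (length l1)). rewrite S_INR. nra.
Qed.

Lemma comb_top f p (G1 G2 : R -> Prop) k th :
  (forall x, G2 x -> G1 x) ->
  (forall x y, G2 x -> G2 y -> term f p x y <= th) ->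
  (forall a b z w, G2 z -> G2 w -> k * term f p a b <= term f p a z + term f p w b + th) ->
  0 <= th -> 0 <= k <= 1 ->
  forall l1 l2, incr l1 -> (forall x, In x l1 -> G1 x) ->
  incr l2 -> (forall x, In x l2 -> G2 x) ->
  exists l, incr l /\ (forall x, In x l -> G1 x) /\
    k * csum f p l1 + csum f p l2 - (3 * INR (length l1) + 3) * th <= csum f p l.
Proof.
  intros H21 Hth H3 Hth0 Hk l1 l2 Hi1 HG1 Hi2 HG2. destruct l1 as [|a l1].
  - exists l2; repeat split; auto. simpl. lra.
  - destruct (split_at a l2 Hi2) as (P & Q & E & HP & HQ).
    assert (HiQ : incr Q) by (rewrite E in Hi2; eapply incr_app_r; eauto).
    assert (HiP : incr P) by (rewrite E in Hi2; eapply incr_app_l; eauto).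
    assert (HG2P : forall x, In x P -> G2 x) by (intros; apply HG2; rewrite E; apply in_or_app; auto).
    assert (HG2Q : forall x, In x Q -> G2 x) by (intros; apply HG2; rewrite E; apply in_or_app; auto).
    destruct (drop_eq a Q HiQ HQ) as (Q' & EQ & HQ').
    assert (HG2Q' : forall x, In x Q' -> G2 x).
    { intros x Hx; apply HG2Q; destruct EQ as [->| ->]; simpl; auto. }
    assert (HiQ' : incr Q') by (destruct EQ as [->| ->]; auto; eapply incr_tail; eauto).
    assert (HcQ : csum f p Q <= th + csum f p Q').
    { destruct EQ as [->| ->]; [|lra]. destruct Q' as [|y Q']; simpl; [lra|].
      assert (term f p a y <= th).
      { apply Hth; [apply HG2Q; left; auto | apply HG2Q'; left; auto]. } lra. }
    destruct (comb f p G1 G2 k th H21 Hth H3 Hth0 Hk l1 a Q' Hi1 HG1 HiQ' HG2Q' HQ')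
      as (l' & Hl'1 & Hl'2 & Hl'3).
    exists (P ++ a :: l'). repeat split.
    + apply incr_app; auto.
    + intros x Hx. apply in_app_or in Hx. destruct Hx as [Hx|[<-|Hx]]; auto.
      apply HG1; simpl; auto.
    + pose proof (csum_app_ge f p P (a :: l')).
      pose proof (app_le f p G2 th Hth Hth0 P Q HG2P HG2Q). rewrite <- E in H0.
      change (length (a :: l1)) with (S (length l1)). rewrite S_INR.
      assert (0 <= INR (length l1) * th) by (apply Rmult_le_pos; auto; apply pos_INR).
      nra.
Qed.

Lemma rsum_shift n g : rsum (S n) g = g O + rsum n (fun i => g (S i)).
Proof. induction n; simpl in *; [ring|]. rewrite IHn. ring. Qed.

Lemma rsum_ext n g h : (forall i, (i < n)%nat -> g i = h i) -> rsum n g = rsum n h.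
Proof. induction n; intros H; simpl; auto. rewrite IHn, H; auto. Qed.

Lemma csum_map f p (x : nat -> R) m k :
  csum f p (map x (seq k m)) = rsum (m - 1) (fun i => term f p (x (k + i)%nat) (x (k + S i)%nat)).
Proof.
  revert k; induction m as [|m IH]; intros k; [reflexivity|].
  destruct m as [|m]; [reflexivity|].
  change (map x (seq k (S (S m)))) with (x k :: map x (seq (S k) (S m))).
  change (csum f p (x k :: map x (seq (S k) (S m)))) with
    (term f p (x k) (x (S k)) + csum f p (map x (seq (S k) (S m)))).
  rewrite IH. replace (S (S m) - 1)%nat with (S m) by lia. rewrite rsum_shift.
  replace (S m - 1)%nat with m by lia.
  replace (k + 0)%nat with k by lia. replace (k + 1)%nat with (S k) by lia. f_equal.
  apply rsum_ext; intros i _. f_equal; f_equal; lia.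
Qed.

Lemma incr_map (x : nat -> R) m k :
  (forall j, (k <= j)%nat -> (S j < k + m)%nat -> x j < x (S j)) -> incr (map x (seq k m)).
Proof.
  revert k; induction m as [|m IH]; intros k H; simpl; auto.
  destruct m as [|m]; simpl; auto. split.
  - apply H; lia.
  - change (incr (map x (seq (S k) (S m)))). apply IH. intros; apply H; lia.
Qed.

Lemma csum_rsum f p q : csum f p q =
  rsum (length q - 1) (fun i => term f p (nth i q 0) (nth (S i) q 0)).
Proof.
  induction q as [|a q IH]; [reflexivity|]. destruct q as [|b q]; [reflexivity|].
  change (csum f p (a :: b :: q)) with (term f p a b + csum f p (b :: q)). rewrite IH.
  simpl length. replace (S (S (length q)) - 1)%nat with (S (length q)) by lia.
  rewrite rsum_shift. simpl. replace (length q - 0)%nat with (length q) by lia. reflexivity.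
Qed.

Lemma incr_nth q i : incr q -> (S i < length q)%nat -> nth i q 0 < nth (S i) q 0.
Proof.
  revert i; induction q as [|a q IH]; intros i H Hl; simpl in Hl; [lia|].
  destruct q as [|b q]; simpl in Hl; [lia|]. destruct i as [|i].
  - simpl; destruct H; auto.
  - change (nth (S i) (a :: b :: q) 0) with (nth i (b :: q) 0).
    change (nth (S (S i)) (a :: b :: q) 0) with (nth (S i) (b :: q) 0).
    apply IH; [destruct H; auto| simpl; lia].
Qed.

Lemma split0 l : incr l -> (forall x, In x l -> 0 <= x <= 1) ->
  exists A l', l = A ++ l' /\ (A = [] \/ A = [0]) /\ (forall x, In x l' -> 0 < x <= 1).
Proof.
  intros Hi H. destruct l as [|x t].
  - exists [], []; simpl; repeat split; auto; tauto.
  - destruct (Req_dec x 0) as [->|Hn].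
    + exists [0], t; split; [reflexivity|split; [auto|]]. intros y Hy.
      pose proof (incr_lt 0 t Hi y Hy). pose proof (H y (or_intror Hy)). lra.
    + exists [], (x :: t); split; [reflexivity|split; [auto|]]. intros y [<-|Hy].
      pose proof (H x (or_introl eq_refl)); lra.
      pose proof (incr_lt x t Hi y Hy). pose proof (H y (or_intror Hy)).
      pose proof (H x (or_introl eq_refl)). lra.
Qed.

Lemma split1 l : incr l -> (forall x, In x l -> 0 < x <= 1) ->
  exists l' B, l = l' ++ B /\ (B = [] \/ B = [1]) /\ (forall x, In x l' -> 0 < x < 1).
Proof.
  induction l as [|x t IH]; intros Hi H.
  - exists [], []; simpl; repeat split; auto; tauto.
  - destruct t as [|y t].
    + destruct (Req_dec x 1) as [->|Hn].
      * exists [], [1]; simpl; repeat split; auto; tauto.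
      * exists [x], []; split; [simpl; auto|split; [auto|]]. intros z [<-|[]].
        pose proof (H x (or_introl eq_refl)); lra.
    + destruct (IH (incr_tail _ _ Hi)) as (l' & B & E & HB & Hl').
      { intros z Hz; apply H; right; auto. }
      exists (x :: l'), B. rewrite E; split; [reflexivity|split; [auto|]].
      intros z [<-|Hz]; auto.
      pose proof (H x (or_introl eq_refl)). pose proof (H y (or_intror (or_introl eq_refl))).
      destruct Hi. lra.
Qed.

Lemma chain_bound p f M : (forall (m : nat) (t : nat -> R),
    is_partition01 m t -> pvar_sum p f m t <= M) ->
  forall l, incr l -> (forall x, In x l -> 0 <= x <= 1) -> csum f p l <= M.
Proof.
  intros HM l Hi H. destruct (split0 l Hi H) as (A & l' & E & HA & Hl').
  assert (Hi' : incr l') by (rewrite E in Hi; eapply incr_app_r; eauto).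
  destruct (split1 l' Hi' Hl') as (l'' & B & E' & HB & Hl'').
  assert (Hi'' : incr l'') by (rewrite E' in Hi'; eapply incr_app_l; eauto).
  set (q := 0 :: l'' ++ [1]).
  assert (Hq : csum f p l <= csum f p q).
  { assert (S1 : csum f p (l'' ++ B) <= csum f p (l'' ++ [1])).
    { destruct HB as [->| ->]; [|lra]. rewrite app_nil_r.
      pose proof (csum_app_ge f p l'' [1]); simpl in H0 |- *; lra. }
    assert (S2 : csum f p (0 :: l'' ++ B) <= csum f p q).
    { unfold q. change (0 :: l'' ++ B) with ((0 :: l'') ++ B).
      change (0 :: l'' ++ [1]) with ((0 :: l'') ++ [1]).
      destruct HB as [->| ->]; [|lra]. rewrite app_nil_r.
      pose proof (csum_app_ge f p (0 :: l'') [1]); simpl csum at 2 in H0; lra. }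
    rewrite E, E'. destruct HA as [->| ->].
    - simpl app. pose proof (csum_cons_ge f p 0 (l'' ++ B)). lra.
    - simpl app. exact S2. }
  assert (Hiq : incr q).
  { unfold q. apply incr_cons. apply incr_app. exact Hi''.
    intros x Hx; apply Hl''; auto. simpl; auto. intros x Hx. apply in_app_or in Hx.
    destruct Hx as [Hx|[<-|[]]]. apply Hl''; auto. lra. }
  eapply Rle_trans; [exact Hq|].
  assert (Eq : csum f p q = pvar_sum p f (S (length l'')) (fun i => nth i q 0)).
  { rewrite csum_rsum. unfold pvar_sum. unfold q at 1. simpl length.
    rewrite length_app. simpl. replace (length l'' + 1 - 0)%nat with (S (length l'')) by lia.
    reflexivity. }
  rewrite Eq. apply HM. split; [|split].
  - unfold q; reflexivity.
  - unfold q. change (nth (S (length l'')) (0 :: l'' ++ [1]) 0) with (nth (length l'') (l'' ++ [1]) 0).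
    rewrite app_nth2; [|lia]. replace (length l'' - length l'')%nat with O by lia. reflexivity.
  - intros i Hi0. apply incr_nth; auto. unfold q; simpl; rewrite length_app; simpl; lia.
Qed.

Theorem lemma3p5 (p : R) (f : R -> Cpx) :
  1 <= p -> BVp p f ->
  forall eps : R, 0 < eps ->
  exists delta : R, 0 < delta /\
    forall (m : nat) (x : nat -> R),
      (forall j, (1 <= j <= m)%nat -> 0 <= x j <= 1) ->
      (forall j, (1 <= j < m)%nat -> x j < x (S j)) ->
      (forall j, (1 <= j <= m)%nat -> Cmod (f (x j)) < delta) ->
      rpow (rsum (m - 1) (fun i => rpow (Cmod (Csub (f (x (S (S i)))) (f (x (S i))))) p)) (1 / p)
        < eps.
Proof.
  intros Hp [M HM] eps Heps.
  assert (Hp0 : 0 < p) by lra.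
  set (chain := fun lam l => incr l /\ forall y, In y l -> (0 <= y <= 1 /\ Cmod (f y) < lam)).
  set (E := fun s => forall lam, 0 < lam -> exists l, chain lam l /\ s <= csum f p l).
  assert (HEb : bound E).
  { exists M. intros s Hs. destruct (Hs 1 Rlt_0_1) as (l & [Hi Hl] & Hsl).
    eapply Rle_trans; [exact Hsl|]. apply (chain_bound p f M HM l Hi).
    intros y Hy; apply Hl; auto. }
  assert (HE0 : E 0).
  { intros lam _. exists []. split; [split; simpl; tauto | simpl; lra]. }
  destruct (completeness E HEb (ex_intro _ 0 HE0)) as [L [HLub HLlub]].
  assert (HL0 : 0 <= L) by (apply HLub; auto).
  assert (Ha : forall eta, 0 < eta -> exists s, E s /\ L - eta < s).
  { intros eta He. apply NNPP. intros Hn.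
    assert (L <= L - eta); [|lra]. apply HLlub. intros s Hs.
    apply Rnot_lt_le. intros Hlt. apply Hn. exists s; auto. }
  assert (Hb : forall eta, 0 < eta -> exists lam, 0 < lam /\
             forall l, chain lam l -> csum f p l < L + eta).
  { intros eta He. apply NNPP. intros Hn.
    assert (E (L + eta)) as HE; [|pose proof (HLub _ HE); lra].
    intros lam Hlam. apply NNPP. intros Hn2. apply Hn. exists lam. split; auto.
    intros l Hl. apply Rnot_le_lt. intros Hle. apply Hn2. exists l; auto. }
  assert (HLz : L <= 0).
  { apply Rnot_lt_le. intros HLp.
    set (R3 := rpow 3 p).
    assert (HR3 : 1 <= R3).
    { unfold R3. replace 1 with (rpow 1 p). apply rpow_le; lra.
      unfold rpow. destruct (Rlt_dec 0 1); [|lra]. unfold Rpower; rewrite ln_1, Rmult_0_r; apply exp_0. }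
    set (k := / R3).
    assert (Hk : 0 < k <= 1).
    { unfold k. split. apply Rinv_0_lt_compat; lra.
      rewrite <- Rinv_1. apply Rinv_le_contravar; lra. }
    set (eta := k * L / (4 + k)).
    assert (Heta : 0 < eta) by (unfold eta; apply Rdiv_lt_0_compat; nra).
    assert (Heta2 : (4 + k) * eta = k * L) by (unfold eta; field; lra).
    destruct (Hb eta Heta) as (lam1 & Hlam1 & Hb1).
    destruct (Ha eta Heta) as (s1 & HEs1 & Hs1).
    destruct (HEs1 lam1 Hlam1) as (l1 & [Hi1 Hl1] & Hsl1).
    set (k1 := INR (length l1)).
    assert (Hk1 : 0 <= k1) by apply pos_INR.
    set (lam2 := Rmin lam1 (rpow (eta / (3 * k1 + 3)) (1 / p) / 2)).
    assert (Hr : 0 < rpow (eta / (3 * k1 + 3)) (1 / p)).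
    { apply rpow_pos. apply Rdiv_lt_0_compat; lra. }
    assert (Hlam2 : 0 < lam2) by (unfold lam2; apply Rmin_glb_lt; lra).
    assert (Hlam21 : lam2 <= lam1) by apply Rmin_l.
    set (th := rpow (2 * lam2) p).
    assert (Hth0 : 0 <= th) by apply rpow_ge0.
    assert (Hthe : (3 * k1 + 3) * th <= eta).
    { assert (th <= eta / (3 * k1 + 3)).
      { unfold th. rewrite <- (rpow_inv2 (eta / (3 * k1 + 3)) p) by (auto; apply Rdiv_lt_0_compat; lra).
        apply rpow_le; auto. split; [lra|]. unfold lam2.
        pose proof (Rmin_r lam1 (rpow (eta / (3 * k1 + 3)) (1 / p) / 2)). lra. }
      apply (Rmult_le_compat_l (3 * k1 + 3)) in H; [|lra].
      replace ((3 * k1 + 3) * (eta / (3 * k1 + 3))) with eta in H by (field; lra). lra. }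
    destruct (Ha eta Heta) as (s2 & HEs2 & Hs2).
    destruct (HEs2 lam2 Hlam2) as (l2 & [Hi2 Hl2] & Hsl2).
    set (G1 := fun y => 0 <= y <= 1 /\ Cmod (f y) < lam1).
    set (G2 := fun y => 0 <= y <= 1 /\ Cmod (f y) < lam2).
    assert (H21 : forall y, G2 y -> G1 y) by (unfold G1, G2; intros y [? ?]; split; auto; lra).
    assert (Hth : forall y z, G2 y -> G2 z -> term f p y z <= th).
    { intros y z [_ Hy] [_ Hz]. unfold term, th. apply rpow_le; auto. split. apply Cmod_ge0.
      pose proof (Cmod_sub_le (f z) (f y)). lra. }
    assert (H3 : forall a b z w, G2 z -> G2 w ->
               k * term f p a b <= term f p a z + term f p w b + th).
    { intros a b z w Hz Hw.
      set (X := Cmod (Csub (f z) (f a))). set (W := Cmod (Csub (f w) (f z))).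
      set (Y := Cmod (Csub (f b) (f w))).
      assert (HD : Cmod (Csub (f b) (f a)) <= X + W + Y).
      { pose proof (Cmod_tri (f b) (f w) (f a)). pose proof (Cmod_tri (f w) (f z) (f a)).
        unfold X, W, Y; lra. }
      assert (HX : 0 <= X) by apply Cmod_ge0. assert (HW : 0 <= W) by apply Cmod_ge0.
      assert (HY : 0 <= Y) by apply Cmod_ge0.
      set (mm := Rmax X (Rmax W Y)).
      assert (Hmm : X <= mm /\ W <= mm /\ Y <= mm).
      { unfold mm. pose proof (Rmax_l X (Rmax W Y)). pose proof (Rmax_r X (Rmax W Y)).
        pose proof (Rmax_l W Y). pose proof (Rmax_r W Y). lra. }
      assert (Hm2 : rpow mm p <= rpow X p + rpow W p + rpow Y p).
      { pose proof (rpow_ge0 X p). pose proof (rpow_ge0 W p). pose proof (rpow_ge0 Y p).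
        unfold mm. unfold Rmax at 2. destruct (Rle_dec W Y); unfold Rmax;
        destruct (Rle_dec X _); lra. }
      assert (HWt : rpow W p <= th) by (apply (Hth z w); auto).
      assert (Hab : term f p a b <= R3 * rpow mm p).
      { unfold term, R3. rewrite <- rpow_mul by lra. apply rpow_le; auto.
        split; [apply Cmod_ge0|lra]. }
      assert (R3 * (k * term f p a b) <= R3 * (term f p a z + term f p w b + th)).
      { replace (R3 * (k * term f p a b)) with (term f p a b) by (unfold k; field; lra).
        eapply Rle_trans; [exact Hab|]. apply Rmult_le_compat_l; [lra|].
        change (term f p a z) with (rpow X p). change (term f p w b) with (rpow Y p). lra. }
      apply Rmult_le_reg_l in H; lra. }
    destruct (comb_top f p G1 G2 k th H21 Hth H3 Hth0 (conj (Rlt_le _ _ (proj1 Hk)) (proj2 Hk))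
                l1 l2 Hi1 Hl1 Hi2) as (U & HiU & HGU & HU).
    { intros y Hy; apply Hl2; auto. }
    assert (csum f p U < L + eta) by (apply Hb1; split; auto).
    fold k1 in HU.
    assert (k * s1 <= k * csum f p l1) by (apply Rmult_le_compat_l; lra).
    nra. }
  assert (Hrp : 0 < rpow eps p) by (apply rpow_pos; auto).
  destruct (Hb (rpow eps p) Hrp) as (lam & Hlam & Hbl).
  exists lam. split; auto. intros m x Hx Hinc Hf.
  assert (Hch : chain lam (map x (seq 1 m))).
  { split.
    - apply incr_map. intros j Hj1 Hj2. apply Hinc. lia.
    - intros y Hy. apply in_map_iff in Hy. destruct Hy as (j & <- & Hj).
      apply in_seq in Hj. split; [apply Hx; lia | apply Hf; lia]. }
  pose proof (Hbl _ Hch) as Hs. rewrite csum_map in Hs.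
  change (rsum (m - 1) (fun i => term f p (x (1 + i)%nat) (x (1 + S i)%nat)))
    with (rsum (m - 1) (fun i => rpow (Cmod (Csub (f (x (S (S i)))) (f (x (S i))))) p)) in Hs.
  set (S := rsum (m - 1) (fun i => rpow (Cmod (Csub (f (x (S (S i)))) (f (x (S i))))) p)) in *.
  destruct (Rlt_dec 0 S) as [HS|HS].
  - rewrite <- (rpow_inv eps p) by auto. apply rpow_lt.
    unfold Rdiv; rewrite Rmult_1_l; apply Rinv_0_lt_compat; lra. lra.
  - unfold rpow at 1. destruct (Rlt_dec 0 S); [lra|]. auto.
Qed.
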